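(* Let $n\ge1$, $p$ a prime dividing $n$, $0\le t\le p-1$, and $q\in B\setminus B_t$. Put $Q:=B_t\cup\{q\}$. If $y\in\mathrm{Sm}(\prec_{deg},Q)\setminus\mathrm{Sm}(\prec_{deg},B_t)$, then $\deg y\ge\frac{n(p-1)}{p}$.
   Context: $\omega_1=e^{2\pi i/p}$, $\omega_j=\omega_1^j$; $B=\{1,\omega_1,\ldots,\omega_{p-1}\}^n\subseteq\mathbb{C}^n$, $B_t=\{(t_1,\ldots,t_n)\in B: t_1\cdots t_n=\omega_t\}$. $\prec_{deg}$ is the deglex order on monomials of $\mathbb{C}[x_1,\dots,x_n]$ (compare degrees first, ties broken lexicographically with $x_n\prec\cdots\prec x_1$). $\mathrm{Sm}(\prec,X)$ is the set of monomials that are not the $\prec$-leading monomial of any nonzero polynomial vanishing on $X$. *)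

(* Defs.v *)
From HB Require Import structures.
From mathcomp Require Import all_boot all_order all_algebra all_field.
Set Implicit Arguments. Unset Strict Implicit. Unset Printing Implicit Defensive.
Import Order.TTheory GRing.Theory Num.Theory.
Local Open Scope ring_scope.

(* omega_1 = e^{2 pi i / p}: the p-th root of -1 with minimal nonnegative
   argument is e^{i pi / p}; its square is e^{2 pi i / p}. *)
Definition omega (p : nat) : algC := (p.-root (-1)) ^+ 2.

Definition point (n : nat) := n.-tuple algC.
Definition mono (n : nat) := n.-tuple nat.

Definition mdeg n (m : mono n) : nat := (\sum_(i < n) tnth m i)%N.

(* lexicographic comparison, first coordinate most significant
   (x_n < ... < x_1) *)
Fixpoint lex_le (a b : seq nat) : bool :=
  match a, b with
  | [::], _ => true
  | _ :: _, [::] => false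
  | x :: a', y :: b' => (x < y)%N || ((x == y) && lex_le a' b')
  end.

Definition deglex_le n (m m' : mono n) : bool :=
  (mdeg m < mdeg m')%N || ((mdeg m == mdeg m') && lex_le m m').

Definition mono_eval n (m : mono n) (x : point n) : algC :=
  \prod_(i < n) tnth x i ^+ tnth m i.

(* A polynomial is given by a finite list s of monomials and a coefficient
   function c; it is sum_{m in s} c m * x^m (monomials outside s have
   coefficient 0; duplicates in s are ignored). *)
Definition peval n (s : seq (mono n)) (c : mono n -> algC) (x : point n) : algC :=
  \sum_(m <- undup s) c m * mono_eval m x.

Definition is_lead n (s : seq (mono n)) (c : mono n -> algC) (y : mono n) : Prop :=
  [/\ y \in s, c y != 0 & forall m, m \in s -> c m != 0 -> deglex_le m y].

Definition vanishes_on n (s : seq (mono n)) (c : mono n -> algC) (X : pred (point n)) :=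
  forall x, X x -> peval s c x = 0.

Definition Sm n (X : pred (point n)) (y : mono n) : Prop :=
  ~ exists (s : seq (mono n)) (c : mono n -> algC), vanishes_on s c X /\ is_lead s c y.

Definition inB n p (x : point n) : bool :=
  all (fun z => z \in [seq omega p ^+ j | j <- iota 0 p]) x.

Definition inBt n p t (x : point n) : bool :=
  inB p x && (\prod_(i < n) tnth x i == omega p ^+ t).

(* Main.v *)
Require Import Defs.
From HB Require Import structures.
From mathcomp Require Import all_boot all_order all_algebra all_field.
From mathcomp Require Import zify.
Set Implicit Arguments. Unset Strict Implicit. Unset Printing Implicit Defensive.
Import Order.TTheory GRing.Theory Num.Theory.

Lemma coord p x c : x < p -> 0 < c < p -> c * (p - c) <= c * x + (p - c) * ((x + c) %% p).
Proof.
move=> xp /andP[c0 cp].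
case: (ltnP (x + c) p) => h.
  rewrite modn_small //; nia.
have -> : x + c = (x + c - p) + p by lia.
rewrite modnDr modn_small; last by lia.
nia.
Qed.

Lemma cbound p c : 0 < c < p -> p.-1 <= c * (p - c).
Proof. move=> /andP[c0 cp]; nia. Qed.

Lemma final_contra p n c R R' : 0 < c < p -> R * p < n * p.-1 -> R' * p < n * p.-1 ->
  n * p.-1 <= c * R + (p - c) * R' -> False.
Proof. move=> /andP[c0 cp] h1 h2 h3; nia. Qed.

Lemma lemC n p' (r : {ffun 'I_n -> 'I_p'.+1}) (m : 'I_n -> nat) : 0 < n ->
  (\sum_j (r j : nat)) * p'.+1 < n * p' -> (\sum_j m j) * p'.+1 < n * p' ->
  (forall i l, m i + p' * r i == m l + p' * r l %[mod p'.+1]) ->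
  forall j, (r j : nat) = m j %% p'.+1.
Proof.
move=> n0 hr hm hc.
pose i0 : 'I_n := Ordinal n0.
pose c := (m i0 + p' * r i0) %% p'.+1.
have cj j : m j %% p'.+1 = (r j + c) %% p'.+1.
  rewrite /c; move/eqP: (hc j i0) => <-.
  rewrite modnDmr; have -> : r j + (m j + p' * r j) = r j * p'.+1 + m j by nia.
  by rewrite modnMDl.
have cp : c < p'.+1 by rewrite ltn_mod.
case: (posnP c) => [c0|cpos].
  by move=> j; rewrite cj c0 addn0 modn_small.
exfalso.
have R'le : (\sum_j m j %% p'.+1) <= \sum_j m j by apply: leq_sum => j _; apply: leq_mod.
apply: (@final_contra p'.+1 n c (\sum_j (r j : nat)) (\sum_j m j %% p'.+1)) => //.
- by rewrite cpos.
- apply: leq_ltn_trans hm; by rewrite leq_mul2r R'le orbT.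
rewrite !big_distrr -big_split /=.
have -> : n * p' = \sum_(j < n) p' by rewrite sum_nat_const card_ord.
apply: leq_sum => j _; rewrite cj.
apply: (leq_trans (@cbound p'.+1 c _)); first by rewrite cpos.
by apply: coord => //; rewrite cpos.
Qed.

Local Open Scope ring_scope.

Lemma omega_prim (p : nat) : prime p -> p.-primitive_root (omega p).
Proof.
move=> pp; have p1 := prime_gt1 pp; have p0 := prime_gt0 pp.
have zp : (p.-root (-1 : algC)) ^+ p = -1 by rewrite rootCK.
have zlt := rootC_lt0 (-1 : algC) p1.
rewrite /omega; move: (p.-root (-1 : algC)) zp zlt => z zp zlt.
have o1 : (z ^+ 2) ^+ p = 1 by rewrite -exprM mulnC exprM zp expr2 mulrNN mulr1.
have on1 : z ^+ 2 != 1.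
  apply/eqP => /eqP; rewrite -subr_eq0 subr_sqr_1 mulf_eq0 => /orP[].
    rewrite subr_eq0 => /eqP z1; move: zp; rewrite z1 expr1n => /eqP.
    by rewrite -subr_eq0 opprK -mulr2n pnatr_eq0.
  rewrite addr_eq0 => /eqP zN1.
  by move: zlt; rewrite zN1 ltrN10.
have [m pm mp] := prim_order_exists p0 o1.
case/primeP: (pp) => _ /(_ m mp) /orP[] /eqP mE; last by rewrite -mE.
by move: pm; rewrite mE => /prim_expr_order; rewrite expr1 => /eqP; rewrite (negbTE on1).
Qed.

Section Main.
Variables (n p' : nat) (w : algC).
Hypothesis hw : p'.+1.-primitive_root w.
Local Notation p := p'.+1.
Local Notation E := {ffun 'I_n -> 'I_p}.

Definition inT t (e : E) : bool := \prod_j w ^+ e j == w ^+ t.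

Lemma wmod x : w ^+ (x %% p) = w ^+ x.
Proof. exact: prim_expr_mod. Qed.

Lemma wadd (x y : 'I_p) : w ^+ (x + y)%R = w ^+ x * w ^+ y.
Proof. rewrite -exprD -[in RHS]wmod. by []. Qed.

Lemma wZp k : w ^+ (inZp k : 'I_p) = w ^+ k.
Proof. by rewrite -[in RHS]wmod. Qed.

Lemma wp : w ^+ p = 1.
Proof. exact: prim_expr_order. Qed.

Lemma lemA t (k : 'I_n -> nat) i l : w ^+ k i != w ^+ k l ->
  \sum_(e : E | inT t e) \prod_j (w ^+ e j) ^+ k j = 0.
Proof.
move=> neq.
have il : i != l by apply: contraNneq neq => ->.
pose g j : algC := if j == i then w else if j == l then w ^+ p' else 1.
pose sig (e : E) : E := [ffun j => if j == i then e j + inZp 1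
   else if j == l then e j + inZp p' else e j].
have sigE e j : w ^+ sig e j = w ^+ e j * g j.
  rewrite /sig /g ffunE; case: eqP => _; first by rewrite wadd wZp.
  by case: eqP => _; rewrite ?wadd ?wZp ?mulr1.
have gP : \prod_j g j = 1.
  rewrite (bigD1 i) //= (bigD1 l) 1?eq_sym //= big1; last first.
    by move=> j /andP[jl ji]; rewrite /g (negbTE jl) (negbTE ji).
  by rewrite /g eqxx eq_sym (negbTE il) eqxx mulr1 -exprS wp.
have gk : \prod_j g j ^+ k j = w ^+ k i * w ^+ (p' * k l).
  rewrite (bigD1 i) //= (bigD1 l) 1?eq_sym //= big1; last first.
    by move=> j /andP[jl ji]; rewrite /g (negbTE jl) (negbTE ji) expr1n.
  by rewrite /g eqxx eq_sym (negbTE il) eqxx mulr1 exprM.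
have sig_inj : injective sig.
  move=> e1 e2 /ffunP H; apply/ffunP => j; have := H j; rewrite /sig !ffunE.
  by case: eqP => _; [move/addIr | case: eqP => _ //; move/addIr].
have Tsig e : inT t (sig e) = inT t e.
  by rewrite /inT (eq_bigr _ (fun j _ => sigE e j)) big_split /= gP mulr1.
set S := (X in X = 0).
have SG : S = S * (w ^+ k i * w ^+ (p' * k l)).
  rewrite {1}/S (reindex_inj sig_inj) /= (eq_bigl _ _ Tsig) /S big_distrl /=.
  apply: eq_bigr => e _; rewrite -gk -big_split /=.
  by apply: eq_bigr => j _; rewrite sigE exprMn.
have G1 : w ^+ k i * w ^+ (p' * k l) != 1.
  apply: contra neq => /eqP h; apply/eqP.
  by rewrite -[RHS]mul1r -h -mulrA -exprD addnC -mulSn exprM wp expr1n mulr1.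
apply/eqP; move/eqP: SG; rewrite -subr_eq0 -{1}[S]mulr1 -mulrBr mulf_eq0.
by case/orP => //; rewrite subr_eq0 eq_sym (negbTE G1).
Qed.


Definition xe (e : E) : point n := [tuple w ^+ (e j) | j < n].
Definition degE (r : E) : nat := (\sum_j (r j : nat))%N.
Definition Cw (a : 'I_n -> nat) (r : E) : algC := \prod_j w ^+ (a j * r j).
Definition W a (e : E) : algC :=
  \sum_(r : E | (degE r * p < n * p')%N) Cw a r * \prod_j (w ^+ e j) ^+ (p' * r j).
Definition NT t : algC := \sum_(e : E | inT t e) 1.


Lemma lemD t (a : 'I_n -> nat) (m : mono n) : (0 < n)%N -> (mdeg m * p < n * p')%N ->
  \sum_(e : E | inT t e) W a e * mono_eval m (xe e) =
  NT t * \prod_j (w ^+ a j) ^+ tnth m j.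
Proof.
move=> n0 hm.
pose k (r : E) j := (tnth m j + p' * r j)%N.
have step : forall e : E, W a e * mono_eval m (xe e) =
   \sum_(r : E | (degE r * p < n * p')%N) Cw a r * \prod_j (w ^+ e j) ^+ k r j.
  move=> e; rewrite /W big_distrl /=; apply: eq_bigr => r _.
  rewrite -mulrA /mono_eval -big_split /=; congr (_ * _); apply: eq_bigr => j _.
  by rewrite tnth_mktuple -exprD addnC.
rewrite (eq_bigr _ (fun e _ => step e)) exchange_big /=.
rewrite (eq_bigr (fun r => Cw a r * \sum_(e : E | inT t e) \prod_j (w ^+ e j) ^+ k r j));
  last by move=> r _; rewrite big_distrr.
pose rs : E := [ffun j => inZp (tnth m j)].
have rsR : (degE rs * p < n * p')%N.
  apply: leq_ltn_trans hm; rewrite leq_mul2r; apply/orP; right.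
  by apply: leq_sum => j _; rewrite ffunE /= leq_mod.
rewrite (bigD1 rs) //= [X in _ + X]big1 ?addr0; last first.
  move=> r /andP[rR rrs].
  case/boolP: [forall i, forall l, w ^+ k r i == w ^+ k r l] => H.
    exfalso; move/negP: rrs; apply; apply/eqP/ffunP => j; apply: val_inj.
    rewrite ffunE /=; apply: (@lemC n p' r (fun j => tnth m j) n0 rR hm) => i l.
    by move/forallP: H => /(_ i) /forallP /(_ l); rewrite (eq_prim_root_expr hw).
  move: H; rewrite negb_forall => /existsP [i]; rewrite negb_forall => /existsP [l ne].
  by rewrite (lemA t ne) mulr0.
have k1 j : w ^+ k rs j = 1.
  rewrite -wmod /k ffunE /= -modnDmr modnMmr modnDmr.
  have -> : (tnth m j + p' * tnth m j = tnth m j * p)%N by rewrite mulnS mulnC.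
  by rewrite modnMl expr0.
rewrite mulrC; congr (_ * _).
  rewrite /NT; apply: eq_bigr => e _; apply: big1 => j _.
  by rewrite -exprM mulnC exprM k1 expr1n.
rewrite /Cw; apply: eq_bigr => j _.
by rewrite ffunE /= -exprM -wmod modnMmr wmod.
Qed.

End Main.


Theorem mainTheorem10 (n p t : nat) (q : point n) (y : mono n) :
  (1 <= n)%N -> prime p -> (p %| n)%N -> (t <= p - 1)%N ->
  inB p q -> ~~ inBt p t q ->
  Sm (fun x : point n => inBt p t x || (x == q)) y ->
  ~ Sm (fun x : point n => inBt p t x) y ->
  (n * (p - 1) <= mdeg y * p)%N.
Proof.
move=> n1 pp _ tle qB _ Smq nSm.
rewrite leqNgt; apply/negP => hlt.
have hw := omega_prim pp.
move: hw hlt tle qB Smq nSm; case: p pp => [//|p'] pp.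
rewrite subn1 /= => hw hlt tle qB Smq nSm.
set w := omega p'.+1 in hw qB *.
apply: nSm => [[s [c [van [ys cy lead]]]]].
apply: Smq; exists s, c; split; last by [].
have [a qa] : exists a : 'I_n -> nat, forall j, tnth q j = w ^+ a j.
  apply: (@fin_all_exists _ (fun _ => nat) (fun j k => tnth q j = w ^+ k)) => j.
  move/all_tnthP: qB => /(_ j) /mapP [k _ ->]; by exists k.
have xeB (e : {ffun 'I_n -> 'I_p'.+1}) : inT w t e -> inBt p'.+1 t (xe w e).
  move=> hT; rewrite /inBt; apply/andP; split.
    apply/all_tnthP => j; rewrite tnth_mktuple; apply/mapP.
    by exists (e j : nat) => //; rewrite mem_iota add0n ltn_ord.
  rewrite /xe; under eq_bigr => j _ do rewrite tnth_mktuple; exact: hT.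
have NT0 : NT n p' w t != 0.
  pose e0 : {ffun 'I_n -> 'I_p'.+1} :=
    [ffun j => if j == Ordinal n1 then inZp t else 0].
  have he0 : inT w t e0.
    rewrite /inT (bigD1 (Ordinal n1)) //= big1 ?mulr1; last first.
      by move=> j /negbTE jn; rewrite ffunE jn expr0.
    by rewrite ffunE eqxx (wZp hw).
  rewrite /NT sumr_const pnatr_eq0 -lt0n; apply/card_gt0P; by exists e0.
have qv : peval s c q = 0.
  suff H : NT n p' w t * peval s c q = 0.
    by move/eqP: H; rewrite mulf_eq0 (negbTE NT0) => /eqP.
  have : NT n p' w t * peval s c q =
      \sum_(e : {ffun 'I_n -> 'I_p'.+1} | inT w t e) W w a e * peval s c (xe w e).
    rewrite /peval big_distrr /=.
    under [RHS]eq_bigr => e _ do rewrite big_distrr /=.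
    rewrite exchange_big /=; apply: eq_big_seq => m ms.
    have [->|cm0] := eqVneq (c m) 0; first by rewrite !mul0r mulr0 big1 // => e _; rewrite mul0r mulr0.
    rewrite mulrCA; under eq_bigr => e _ do rewrite mulrCA; rewrite -big_distrr /=; congr (_ * _).
    have hm : (mdeg m * p'.+1 < n * p')%N.
      apply: leq_ltn_trans hlt; rewrite leq_mul2r; apply/orP; right.
      have := lead m; rewrite -mem_undup => /(_ ms cm0); rewrite /deglex_le.
      by case/orP => [/ltnW|/andP[/eqP -> _]].
    rewrite (lemD hw t a n1 hm) /mono_eval; congr (_ * _); apply: eq_bigr => j _; by rewrite qa.
  move=> ->; rewrite big1 // => e /xeB /van ->; by rewrite mulr0.
move=> x /orP[/van //| /eqP ->]; exact: qv.
Qed.
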